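(* Let $\Lambda$ be a $\sigma$-finite measure on $\mathcal Y\subseteq\mathbb R$, and let $\{p(y|x,\theta):\theta\in\Theta\}$, $\Theta\subseteq\mathbb R^m$ open, be a parametric family of positive conditional densities with respect to $\Lambda$, differentiable in $\theta$, such that differentiation in $\theta$ under the integral sign is permitted. Fix $\gamma\in\mathbb R\setminus\{0,-1\}$ and define the $\gamma$-expression $$p^{(\gamma)}(y|x,\theta)=\frac{p(y|x,\theta)^{\gamma+1}}{\int_{\mathcal Y}p(\tilde y|x,\theta)^{\gamma+1}\,\mathrm d\Lambda(\tilde y)}$$ (assumed well defined), the $\gamma$-loss $L_\gamma(\theta;\Lambda)=-\frac1n\frac1\gamma\sum_{i=1}^n\{p^{(\gamma)}(Y_i|X_i,\theta)\}^{\gamma/(\gamma+1)}$ and the $\gamma$-estimating function $S_\gamma(\theta;\Lambda)=\partial L_\gamma(\theta;\Lambda)/\partial\theta$. Suppose that, conditionally on $\underline X=(X_1,\dots,X_n)$, each $Y_i$ has density $p(\cdot|X_i,\theta_0)$ for some $\theta_0\in\Theta$. Then $\mathbb E_0[S_\gamma(\theta_0;\Lambda)\mid\underline X]=0$, where $\mathbb E_0$ denotes conditional expectation under these true distributions. *)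

(* Defs.v *)
From HB Require Import structures.
From mathcomp Require Import all_boot all_order all_algebra.
From mathcomp Require Import all_classical all_reals all_analysis.
Set Implicit Arguments. Unset Strict Implicit. Unset Printing Implicit Defensive.
Import Order.TTheory GRing.Theory Num.Theory.
Import numFieldNormedType.Exports.
Local Open Scope classical_set_scope.
Local Open Scope ring_scope.

(* p : X -> 'rV[R]_m -> R -> R,  p x th y = p(y | x, theta).
   Lam : measure on the Borel sets of R, D = the sample space \mathcal Y. *)

Definition gamma_norm (R : realType) (X : Type) (m : nat)
  (p : X -> 'rV[R]_m -> R -> R) (Lam : {measure set R -> \bar R}) (D : set R)
  (g : R) (x : X) (th : 'rV[R]_m) : R :=
  Rintegral Lam D (fun t => p x th t `^ (g + 1)).

Definition gamma_expr (R : realType) (X : Type) (m : nat)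
  (p : X -> 'rV[R]_m -> R -> R) (Lam : {measure set R -> \bar R}) (D : set R)
  (g : R) (x : X) (th : 'rV[R]_m) (y : R) : R :=
  p x th y `^ (g + 1) / gamma_norm p Lam D g x th.

Definition gamma_loss (R : realType) (X : Type) (m : nat)
  (p : X -> 'rV[R]_m -> R -> R) (Lam : {measure set R -> \bar R}) (D : set R)
  (g : R) (n : nat) (xs : 'I_n -> X) (ys : 'I_n -> R) (th : 'rV[R]_m) : R :=
  - (n%:R)^-1 * g^-1 *
    \sum_(i < n) (gamma_expr p Lam D g (xs i) th (ys i)) `^ (g / (g + 1)).

Definition gamma_est (R : realType) (X : Type) (m : nat)
  (p : X -> 'rV[R]_m -> R -> R) (Lam : {measure set R -> \bar R}) (D : set R)
  (g : R) (n : nat) (xs : 'I_n -> X) (ys : 'I_n -> R) (th : 'rV[R]_m) : 'rV[R]_m :=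
  \row_(j < m) 'D_(delta_mx 0 j) (gamma_loss p Lam D g xs ys) th.

(* Main.v *)
Require Import Defs.
From HB Require Import structures.
From mathcomp Require Import all_boot all_order all_algebra.
From mathcomp Require Import all_classical all_reals all_analysis measurable_realfun.
From mathcomp Require Import ring lra.
Import Order.TTheory GRing.Theory Num.Theory.
Import numFieldNormedType.Exports.
Local Open Scope classical_set_scope.
Local Open Scope ring_scope.

Section dens.
Local Open Scope ereal_scope.
Context d (T : measurableType d) (R : realType).
Variables (nu mu : {measure set T -> \bar R}) (gr : T -> R).
Hypotheses (gr0 : forall x, (0 <= gr x)%R) (mgr : measurable_fun setT gr)
  (hnu : forall A, measurable A -> nu A = \int[mu]_(x in A) (gr x)%:E).
Import HBNNSimple.

Lemma dens_nn f E : (forall x, 0 <= f x) ->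
    measurable E -> measurable_fun E f ->
  \int[mu]_(x in E) (f x * (gr x)%:E) = \int[nu]_(x in E) f x.
Proof.
move=> f0 mE mf; set g := (fun x => (gr x)%:E).
have mg : measurable_fun setT g by exact/measurable_EFinP.
pose h := nnsfun_approx mE mf.
have -> : \int[nu]_(x in E) f x =
    lim (\int[nu]_(x in E) (EFin \o h n) x @[n --> \oo]).
  have fE x : E x -> f x = lim ((EFin \o h n) x @[n --> \oo]).
    by move=> Ex; apply/esym/cvg_lim => //; exact: cvg_nnsfun_approx.
  under eq_integral => x /[!inE] /fE -> //.
  apply: monotone_convergence => //.
  - move=> n; apply/measurable_EFinP.
    by apply: (measurable_funS measurableT) => //; exact/measurable_funP.
  - by move=> n x Ex //=; rewrite lee_fin.
  - by move=> x Ex a b ab; rewrite lee_fin; exact/lefP/nd_nnsfun_approx.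
have -> : \int[mu]_(x in E) (f x * g x) =
    lim (\int[mu]_(x in E) ((EFin \o h n) \* g) x @[n --> \oo]).
  have fg x : E x -> f x * g x = lim (((EFin \o h n) \* g) x @[n --> \oo]).
    by move=> Ex; apply/esym/cvg_lim => //; apply: cvgeZr;
      [by []|exact: cvg_nnsfun_approx].
  under eq_integral => x /[!inE] /fg -> //.
  apply: monotone_convergence => [//| | |].
  - move=> n; apply/emeasurable_funM; apply/measurable_funTS => //.
    exact/measurable_EFinP.
  - by move=> n x Ex /=; rewrite mule_ge0 ?lee_fin.
  - by move=> x Ex a b ab/=; rewrite lee_wpmul2r ?lee_fin//; exact/lefP/nd_nnsfun_approx.
suff suf n : \int[mu]_(x in E) ((EFin \o h n) x * g x) =
    \int[nu]_(x in E) (EFin \o h n) x.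
  by under eq_fun do rewrite suf.
transitivity (\int[nu]_(x in E)
   (\sum_(y \in range (h n)) (y * \1_(h n @^-1` [set y]) x)%:E)); last first.
  by apply: eq_integral => t tE; rewrite /= fimfunE -fsumEFin.
have indich m r : measurable_fun E (fun x => (r * \1_(h m @^-1` [set r]) x)%:E).
  by apply: (measurable_comp measurableT) => //; exact: measurable_funM.
rewrite ge0_integral_fsum//; last by move=> m y Ey; exact: nnfun_muleindic_ge0.
transitivity (\int[mu]_(x in E) (\sum_(y \in range (h n))
    (y * \1_(h n @^-1` [set y]) x)%:E * g x)).
  under [RHS]eq_integral => x xE.
    rewrite -ge0_mule_fsuml => [|y]; last exact: nnfun_muleindic_ge0.
    rewrite fsumEFin // -(fimfunE _ x); over.
  by [].
rewrite ge0_integral_fsum//; last 2 first.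
  - move=> y; apply: emeasurable_funM => //; apply: measurable_funTS.
    exact: mg.
  - by move=> m y Ey; rewrite mule_ge0 ?nnfun_muleindic_ge0 ?lee_fin.
apply: eq_fsbigr => r rhn.
under [RHS]eq_integral do rewrite EFinM.
rewrite integralZl_indic_nnsfun => //.
under eq_integral do rewrite EFinM -muleA.
rewrite ge0_integralZl//.
- under eq_integral do rewrite muleC.
  rewrite (eq_integral (g \_ (h n @^-1` [set r]))); last first.
    by move=> x xE; rewrite epatch_indic.
  by rewrite -integral_mkcondr -hnu// integral_indic// setIC.
- apply: emeasurable_funM; first exact/measurable_EFinP.
  exact/measurable_funTS.
- by move=> t Et; rewrite mule_ge0 ?lee_fin.
- by move: rhn; rewrite inE => -[t _ <-]; rewrite lee_fin.
Qed.

Lemma funepos_mulg f x : (fun y => f y * (gr y)%:E)^\+ x = f^\+ x * (gr x)%:E.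
Proof.
rewrite !funeposE /=; have [f0|f0] := leP 0 (f x).
  rewrite !max_l// mule_ge0// lee_fin//.
have h1 : f x * (gr x)%:E <= 0 by rewrite mule_le0_ge0 ?lee_fin// ltW.
by rewrite (max_r h1) mul0e.
Qed.

Lemma funeneg_mulg f x : (fun y => f y * (gr y)%:E)^\- x = f^\- x * (gr x)%:E.
Proof.
rewrite !funenegE /=; have [f0|f0] := leP 0 (f x).
  have h1 : 0 <= f x * (gr x)%:E by rewrite mule_ge0// lee_fin.
  by rewrite max_r ?oppe_le0// max_r ?oppe_le0// mul0e.
have h1 : f x * (gr x)%:E <= 0 by rewrite mule_le0_ge0 ?lee_fin// ltW.
rewrite max_l ?oppe_ge0// max_l ?oppe_ge0 ?ltW//.
by rewrite mulNe.
Qed.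

Lemma dens_int f E : measurable E -> measurable_fun E f ->
  \int[mu]_(x in E) (f x * (gr x)%:E) = \int[nu]_(x in E) f x.
Proof.
move=> mE mf; rewrite integralE [RHS]integralE.
under eq_integral do rewrite funepos_mulg.
under [X in _ - X = _]eq_integral do rewrite funeneg_mulg.
rewrite !dens_nn//.
- exact: measurable_funeneg.
- exact: measurable_funepos.
Qed.
End dens.

Section chain.
Context (R : realType) (V : normedModType R).

Lemma derive_line (f : V -> R) x v :
  'D_v f x = 'D_1 (fun h : R => f (h *: v + x)) 0.
Proof.
rewrite /derive; set g1 := fun h => h^-1 *: _; set g2 := fun h => h^-1 *: _.
suff -> : g1 = g2 by [].
by rewrite funeqE /g1 /g2 => h /=; rewrite addr0 scale0r add0r [_%:A]mulr1.
Qed.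

Lemma is_derive_chain (f : V -> R) (F : R -> R) x v df dF :
  is_derive x v f df -> is_derive (f x) 1 F dF ->
  is_derive x v (F \o f) (dF * df).
Proof.
move=> [fd fv] [Fd Fv].
have h1 : is_derive (0:R) 1 (fun h : R => f (h *: v + x)) df.
  split; first exact: (proj1 (derivable1P f x v) fd).
  by rewrite -derive_line.
have h2 : is_derive ((fun h : R => f (h *: v + x)) 0) 1 F dF.
  by rewrite /= scale0r add0r; split.
have [d1 v1] := @is_derive1_comp _ F (fun h : R => f (h *: v + x)) 0 dF df h2 h1.
split; first exact: (proj2 (derivable1P (F \o f) x v) d1).
by rewrite derive_line.
Qed.

Lemma is_derive_inv (f : V -> R) x v df : f x != 0 ->
  is_derive x v f df -> is_derive x v (fun y => (f y)^-1) (- (f x) ^- 2 *: df).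
Proof.
move=> fx0 [fd fv]; split; first exact: derivableV.
by rewrite deriveV// fv.
Qed.
End chain.
Arguments is_derive_chain {R V f F x v df dF}.
Arguments is_derive_inv {R V f x v df}.

Section pos.
Local Open Scope ereal_scope.
Context d (T : measurableType d) (R : realType) (mu : {measure set T -> \bar R}).

Lemma int_pos (D : set T) (f : T -> R) : measurable D -> measurable_fun D f ->
  (forall y, D y -> (0 < f y)%R) -> mu D != 0 -> 0 < \int[mu]_(y in D) (f y)%:E.
Proof.
move=> mD mf fpos muD.
pose Dk (k : nat) := D `&` f @^-1` `]((k.+1%:R)^-1)%R, +oo[%classic.
have mDk k : measurable (Dk k) by apply: mf => //; exact: measurable_itv.
have [k Hk] : exists k, mu (Dk k) != 0.
  apply: contrapT => /forallNP H.
  have Hk k : mu (Dk k) = 0 by apply/eqP/negPn/negP/H.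
  have : mu.-negligible (\bigcup_k Dk k).
    by apply: negligible_bigcup => k; exists (Dk k); split.
  move=> Hn; move/negP: muD; apply; apply/eqP.
  apply: measure_negligible => //; apply: negligibleS Hn.
  move=> y Dy; exists (Num.truncn (f y)^-1) => //; split => //=.
  rewrite in_itv /= andbT -[ltRHS]invrK ltf_pV2 ?posrE ?invr_gt0 ?fpos//.
  exact: truncnS_gt.
apply: (@lt_le_trans _ _ (\int[mu]_(y in Dk k) (k.+1%:R^-1)%:E)).
  rewrite integral_cst// mule_gt0 ?lte_fin ?invr_gt0//.
  by rewrite lt0e Hk measure_ge0.
apply: (@le_trans _ _ (\int[mu]_(y in Dk k) (f y)%:E)).
  apply: ge0_le_integral => //.
  - apply/measurable_EFinP; apply: measurable_funS mf => //; exact: subIsetl.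
  - by move=> y [Dy /=]; rewrite in_itv /= andbT => lt; rewrite lee_fin ltW.
apply: ge0_subset_integral => //.
- exact/measurable_EFinP.
- by move=> y Dy; rewrite lee_fin ltW// fpos.
- exact: subIsetl.
Qed.
End pos.

Section calc.
Variables (R : realType) (X : Type) (m : nat) (p : X -> 'rV[R]_m -> R -> R)
  (Lam : {measure set R -> \bar R}) (D : set R) (g : R) (x : X)
  (th0 : 'rV[R]_m) (v : 'rV[R]_m).
Hypotheses (g1 : g != -1) (Npos : 0 < gamma_norm p Lam D g x th0)
 (pdiff : forall y, D y -> differentiable (fun t => p x t y) th0)
 (ppos : forall y, D y -> 0 < p x th0 y)
 (Ndiff : differentiable (gamma_norm p Lam D g x) th0).

Let N := gamma_norm p Lam D g x.

Lemma calc y : D y ->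
  derivable (fun t => gamma_expr p Lam D g x t y `^ (g / (g + 1))) th0 v /\
  'D_v (fun t => gamma_expr p Lam D g x t y `^ (g / (g + 1))) th0 * p x th0 y =
  (g / (g + 1)) * (N th0)^-1 `^ (g / (g + 1) - 1) *
   ((N th0)^-1 * 'D_v (fun t => p x t y `^ (g + 1)) th0
    - (N th0)^-2 * 'D_v N th0 * p x th0 y `^ (g + 1)).
Proof.
move=> Dy; have Dy0 := Dy; move: Dy0 => Dy0.
set a := g / (g + 1).
have hp := derivableP (@diff_derivable _ _ _ _ th0 v (pdiff y Dy)).
have [dq1 _] := is_derive_chain hp (is_derive1_powR (g + 1) (ppos y Dy)).
have hq : is_derive th0 v (fun t => p x t y `^ (g + 1))
    ('D_v (fun t => p x t y `^ (g + 1)) th0) by exact: derivableP.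
have hN := derivableP (@diff_derivable _ _ _ _ th0 v Ndiff).
have hNi := is_derive_inv (lt0r_neq0 Npos) hN.
have he := is_deriveM hq hNi.
have epos : 0 < p x th0 y `^ (g + 1) * (N th0)^-1.
  by rewrite mulr_gt0 ?powR_gt0 ?ppos ?invr_gt0.
have hc := is_derive_chain he (is_derive1_powR a epos).
have hc' : is_derive th0 v (fun t => gamma_expr p Lam D g x t y `^ a) _ := hc.
split; first by case: hc'.
rewrite (@derive_val _ _ _ _ _ _ _ hc').
have g10 : g + 1 != 0 by rewrite addr_eq0.
have e1 : (g + 1) * (a - 1) = -1 by rewrite /a; field.
rewrite powRM ?powR_ge0 ?invr_ge0 ?ltW// -powRrM e1 powR_inv1 ?ltW ?ppos//.
have P0 : p x th0 y != 0 by rewrite gt_eqF ?ppos.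
rewrite /N; move: P0.
set P := p x th0 y; set Nn := gamma_norm p Lam D g x th0.
set dq := 'D_v _ th0; set dN := 'D_v _ th0.
move=> P0.
rewrite /GRing.scale /=.
field.
by rewrite P0 andbT /Nn gt_eqF.
Qed.
End calc.


Section aux.
Local Open Scope ereal_scope.
Context d (T : measurableType d) (R : realType) (mu : {measure set T -> \bar R}).
Import HBNNSimple.

Lemma nn_le_ae (f1 f2 : T -> \bar R) N : mu.-negligible N ->
  (forall x, 0 <= f1 x) -> (forall x, 0 <= f2 x) -> (forall x, ~ N x -> f1 x = f2 x) ->
  \int[mu]_x f1 x <= \int[mu]_x f2 x.
Proof.
move=> [A [mA A0 NA]] f10 f20 ef0.
have mE : measurable (~` A) by exact: measurableC.
have mE0 : mu (~` (~` A)) = 0 by rewrite setCK.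
have ef x : (~` A) x -> f1 x = f2 x by move=> Ax; apply: ef0 => /NA.
rewrite !ge0_integralTE//.
apply: ge_ereal_sup => _ [h /= hf1 <-].
pose h' := mul_nnsfun h (indic_nnsfun R mE).
have -> : sintegral mu h = sintegral mu h'.
  rewrite -!integralT_nnsfun.
  apply: ae_eq_integral => //=.
  - exact/measurable_EFinP.
  - apply/measurable_EFinP; exact: measurable_funM.
  rewrite /ae_eq /prop_near1 /almost_everywhere /=.
  exists (~` (~` A)); split; first exact: measurableC.
  - exact: mE0.
  move=> x /= Hx Ex; apply: Hx => _.
  by rewrite /mindic indicE mem_set// mulr1.
apply: ereal_sup_ubound; exists h' => // x /=.
rewrite /mindic indicE; case: (pselect ((~` A) x)) => Ex.
  by rewrite mem_set// mulr1 -ef.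
by rewrite memNset// mulr0.
Qed.

Lemma int_ae (f1 f2 : T -> \bar R) N : mu.-negligible N ->
  (forall x, ~ N x -> f1 x = f2 x) -> \int[mu]_x f1 x = \int[mu]_x f2 x.
move=> hN ef; rewrite integralE [RHS]integralE; congr (_ - _);
  apply/eqP; rewrite eq_le; apply/andP; split; apply: (@nn_le_ae _ _ N hN) => //;
  move=> x Nx; by rewrite ?funeposE ?funenegE ef.



Qed.
End aux.

Section transfer.
Local Open Scope ereal_scope.
Context d (T : measurableType d) (R : realType) (P : probability T R).

Lemma transfer (Y : {mfun T >-> R}) (F : R -> \bar R) : measurable_fun setT F ->
  \int[P]_w F (Y w) = \int[distribution P Y]_y F y.
Proof.
move=> mF; rewrite integralE [RHS]integralE; congr (_ - _).
- rewrite ge0_integral_distribution//; last exact: measurable_funepos.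
  by apply: eq_integral => w _; rewrite /= !funeposE.
- rewrite ge0_integral_distribution//; last exact: measurable_funeneg.
  by apply: eq_integral => w _; rewrite /= !funenegE.
Qed.
End transfer.

Theorem mainTheorem5 (R : realType) (X : Type) (m : nat)
  (Theta : set 'rV[R]_m) (p : X -> 'rV[R]_m -> R -> R)
  (Lam : {measure set R -> \bar R}) (D : set R) (g : R)
  (* sample space \mathcal Y \subseteq R, Lam sigma-finite on it *)
  (mD : measurable D) (sfLam : sigma_finite D Lam)
  (* Theta open *)
  (oTheta : open Theta)
  (* positive conditional densities w.r.t. Lam *)
  (p_pos : forall x th y, th \in Theta -> y \in D -> 0 < p x th y)
  (p_meas : forall x th, th \in Theta -> measurable_fun D (p x th))
  (p_dens : forall x th, th \in Theta ->
     (\int[Lam]_(y in D) (p x th y)%:E = 1)%E)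
  (* differentiable in theta *)
  (p_diff : forall x y, y \in D -> forall th, th \in Theta ->
     differentiable (fun t => p x t y) th)
  (* gamma different from 0 and -1 *)
  (g0 : g != 0) (g1 : g != -1)
  (* the gamma-expression is well defined *)
  (p_int : forall x th, th \in Theta ->
     Lam.-integrable D (fun y => (p x th y `^ (g + 1))%:E))
  (* differentiation in theta under the integral sign is permitted *)
  (p_dui : forall x th, th \in Theta ->
     differentiable (gamma_norm p Lam D g x) th /\
     forall v : 'rV[R]_m,
       Lam.-integrable D (fun y => ('D_v (fun t => p x t y `^ (g + 1)) th)%:E) /\
       'D_v (gamma_norm p Lam D g x) th =
         Rintegral Lam D (fun y => 'D_v (fun t => p x t y `^ (g + 1)) th))
  (* sample: covariates fixed (conditioning on X), responses random *)
  (n : nat) (xs : 'I_n -> X)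
  (dO : measure_display) (Omega : measurableType dO) (P : probability Omega R)
  (Y : 'I_n -> {mfun Omega >-> R})
  (th0 : 'rV[R]_m) (th0_in : th0 \in Theta)
  (* conditionally on X, each Y_i has density p(. | X_i, th0) w.r.t. Lam *)
  (Y_law : forall i (A : set R), measurable A ->
     distribution P (Y i) A = (\int[Lam]_(y in A `&` D) (p (xs i) th0 y)%:E)%E) :
  forall j : 'I_m,
    ('E_P[fun w => gamma_est p Lam D g xs (fun i => Y i w) th0 ord0 j] = 0)%E.
Proof.
move=> j.
set v : 'rV[R]_m := delta_mx 0 j.
set a := g / (g + 1).
have g10 : g + 1 != 0 by rewrite addr_eq0.
have mp i : measurable_fun D (p (xs i) th0) := p_meas (xs i) th0 th0_in.
have mq i : measurable_fun D (fun y => p (xs i) th0 y `^ (g + 1)).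
  exact: measurableT_comp (measurable_powR _) (mp i).
have Npos i : 0 < gamma_norm p Lam D g (xs i) th0.
  have L0 : Lam D != 0%E.
    apply/eqP => L0; move: (p_dens (xs i) th0 th0_in).
    rewrite null_set_integral//; last exact/measurable_EFinP.
    by move/esym/eqP; rewrite onee_eq0.
  rewrite /gamma_norm /Rintegral; apply: fine_gt0; apply/andP; split.
    apply: int_pos => // y Dy; apply: powR_gt0; apply: p_pos => //; exact: mem_set.
  by rewrite ltey; case/fin_numP: (integrable_fin_num mD (p_int (xs i) _ th0_in)).
pose N i := gamma_norm p Lam D g (xs i) th0.
pose dq i y := 'D_v (fun t => p (xs i) t y `^ (g + 1)) th0.
pose dN i := 'D_v (gamma_norm p Lam D g (xs i)) th0.
pose K i := a * (N i)^-1 `^ (a - 1).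
pose h i y := K i * ((N i)^-1 * dq i y - (N i) ^- 2 * dN i * p (xs i) th0 y `^ (g + 1)).
pose dd i y := h i y * p (xs i) th0 y `^ (-1).
pose ddt i := (dd i) \_ D.
pose c := - (n%:R)^-1 * g^-1.
have Dp i y : D y ->
  derivable (fun t => gamma_expr p Lam D g (xs i) t y `^ a) th0 v /\
  'D_v (fun t => gamma_expr p Lam D g (xs i) t y `^ a) th0 * p (xs i) th0 y = h i y.
  apply: calc => //.
  - move=> y' Dy'; apply: p_diff => //; exact: mem_set.
  - move=> y' Dy'; apply: p_pos => //; exact: mem_set.
  - exact: (p_dui (xs i) th0 th0_in).1.
have ddE i y : D y ->
    'D_v (fun t => gamma_expr p Lam D g (xs i) t y `^ a) th0 = ddt i y.
  move=> Dy; have p0 : 0 < p (xs i) th0 y by apply: p_pos => //; exact: mem_set.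
  rewrite /ddt patchE mem_set// /dd powR_inv1 ?ltW// -(Dp i y Dy).2 mulfK//.
  by rewrite gt_eqF.
have mY i : measurable (Y i @^-1` (~` D)).
  by rewrite -[X in measurable X]setTI; apply: measurable_funP => //; exact: measurableC.
have nY i : P (Y i @^-1` (~` D)) = 0%E.
  have := Y_law i (~` D) (measurableC mD).
  by rewrite setICl integral_set0.
pose F k := if @insub _ (fun k => (k < n)%N) 'I_n k is Some i then Y i @^-1` (~` D) else set0.
have negF : P.-negligible (\bigcup_k F k).
  apply: negligible_bigcup => k; rewrite /F; case: insubP => [i _ _|_].
    by exists (Y i @^-1` (~` D)); split; [exact: mY|exact: nY|].
  exact: negligible_set0.
rewrite unlock.
rewrite (@int_ae _ _ _ P _ (fun w => (c * \sum_(i < n) ddt i (Y i w))%:E) _ negF); last first.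
  move=> w Nw.
  have DY i : D (Y i w).
    apply: contrapT => nD; apply: Nw; exists (val i) => //.
    by rewrite /F valK.
  rewrite /gamma_est mxE; congr EFin.
  pose hh (i : 'I_n) := fun t => gamma_expr p Lam D g (xs i) t (Y i w) `^ a.
  have -> : gamma_loss p Lam D g xs (fun i => Y i w) = c \*: \sum_(i < n) hh i.
    by apply/funext => th; rewrite /gamma_loss fct_sumE.
  have hd : is_derive th0 v (c \*: \sum_(i < n) hh i)
      (c *: \sum_(i < n) 'D_v (hh i) th0).
    apply: is_deriveZ; apply: is_derive_sum => i; apply: derivableP.
    exact: (Dp i _ (DY i)).1.
  rewrite (@derive_val _ _ _ _ _ _ _ hd); congr (_ * _).
  by apply: eq_bigr => i _; rewrite /hh ddE.
have hi i : P.-integrable setT (fun w => (ddt i (Y i w))%:E) /\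
    (\int[P]_w (ddt i (Y i w))%:E = 0)%E.
  have [Ndiff Hdui] := p_dui (xs i) th0 th0_in.
  have [Idq EdN] := Hdui v.
  have Iq := p_int (xs i) th0 th0_in.
  have mdq : measurable_fun D (dq i) by apply/measurable_EFinP; exact: (measurable_int _ Idq).
  have mh : measurable_fun D (h i).
    apply: measurable_funM => //; apply: measurable_funB.
      by apply: measurable_funM.
    by apply: measurable_funM => //; exact: mq.
  have mdd : measurable_fun D (dd i).
    apply: measurable_funM => //; exact: measurableT_comp (measurable_powR _) (mp i).
  have mddt : measurable_fun setT (ddt i) by exact/(measurable_restrictT _ _).1.
  pose gr := (p (xs i) th0) \_ D.
  have gr0 y : 0 <= gr y.
    rewrite /gr patchE; case: ifPn => // yD; apply: ltW; exact: p_pos.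
  have mgr : measurable_fun setT gr by exact/(measurable_restrictT _ _).1.
  have hnu A : measurable A -> distribution P (Y i) A = (\int[Lam]_(y in A) (gr y)%:E)%E.
    move=> mA; rewrite Y_law// integral_mkcondr; apply: eq_integral => y _.
    by rewrite /gr !patchE; case: ifP.
  have key (G : R -> \bar R) : measurable_fun setT G ->
      (\int[P]_w G (ddt i (Y i w)) = \int[Lam]_y (G (ddt i y) * (gr y)%:E))%E.
    move=> mG; rewrite (@transfer _ _ _ P (Y i) (G \o ddt i)); last exact: measurableT_comp.
    by rewrite -(@dens_int _ _ _ _ _ gr gr0 mgr hnu) //; exact: measurableT_comp.
  have prod y : ddt i y * gr y = (h i \_ D) y.
    rewrite /ddt /gr !patchE; case: ifPn => [/set_mem Dy|_]; last by rewrite mulr0.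
    have p0 : 0 < p (xs i) th0 y by apply: p_pos => //; exact: mem_set.
    by rewrite /dd powR_inv1 ?ltW// mulfVK// gt_eqF.
  have intD (f : R -> R) : (\int[Lam]_y ((f \_ D) y)%:E = \int[Lam]_(y in D) (f y)%:E)%E.
    by rewrite [RHS]integral_mkcond; apply: eq_integral => y _; rewrite !patchE; case: ifP.
  have Ih : Lam.-integrable D (fun y => (h i y)%:E).
    have := integrableZl mD (K i) (integrableB mD (integrableZl mD ((N i)^-1) Idq)
              (integrableZl mD ((N i) ^- 2 * dN i) Iq)).
    by apply: eq_integrable => // y _; rewrite /h /= !EFinM EFinB !EFinM.
  split.
    apply/integrableP; split.
      by apply/measurable_EFinP; exact: measurableT_comp.
    rewrite (key (fun r => `|r%:E|)%E); last by apply: measurableT_comp => //.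
    under eq_integral do rewrite /= -EFinM -[gr _]ger0_norm ?gr0 // -normrM prod.
    rewrite (eq_integral (fun y => (((fun y => `|h i y|) \_ D) y)%:E)); last first.
      by move=> y _; rewrite !patchE; case: ifP => // _; rewrite normr0.
    rewrite (intD (fun y => `|h i y|)).
    by move/integrableP: Ih => [].
  rewrite (key EFin) //.
  under eq_integral do rewrite -EFinM prod.
  rewrite intD.
  rewrite /h.
  have Iq' : Lam.-integrable D (fun y => (p (xs i) th0 y `^ (g + 1))%:E) := Iq.
  have Idq' : Lam.-integrable D (fun y => (dq i y)%:E) := Idq.
  have Eq : (\int[Lam]_(y in D) (p (xs i) th0 y `^ (g + 1))%:E)%E = (N i)%:E.
    by rewrite /N /gamma_norm /Rintegral fineK// (integrable_fin_num mD Iq).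
  have Edq : (\int[Lam]_(y in D) (dq i y)%:E)%E = (dN i)%:E.
    by rewrite /dN EdN /Rintegral fineK// (integrable_fin_num mD Idq).
  under eq_integral do rewrite EFinM EFinB (EFinM (N i)^-1) (EFinM (N i ^- 2 * dN i)).
  rewrite integralZl//; last first.
    by apply: integrableB => //; apply: integrableZl.
  rewrite integralB//; try by apply: integrableZl.
  rewrite integralZl// integralZl// Eq Edq -[X in (X - _)%E]EFinM -[X in (_ - X)%E]EFinM -EFinB -EFinM.
  congr EFin.
  have N0 : N i != 0 by rewrite gt_eqF// Npos.
  by field.
under eq_integral do rewrite EFinM -sumEFin.
rewrite (integralZl measurableT); last by apply: integrable_sum => // k _; exact: (hi k).1.
rewrite (integral_sum measurableT); last by move=> k; exact: (hi k).1.
by rewrite big1 ?mule0// => k _; exact: (hi k).2.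
Qed.
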